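(* Let $A$ be a finite set of options containing a distinguished default option $0$, and let $\mathcal{L}$ be the set of all Llull matrices on $A$, viewed as a subset of a finite-dimensional real space. For $v\in\mathcal{L}$ let $W(v)$ denote the set of path-revised approval choices of $v$. Then $W$ is upper semicontinuous on $\mathcal{L}$: every $v\in\mathcal{L}$ has a neighbourhood $U$ such that $W(w)\subseteq W(v)$ for every $w\in U\cap\mathcal{L}$.
   Context: A Llull matrix on $A$ is a family of real numbers $v_{xy}\in[0,1]$, indexed by ordered pairs $(x,y)$ of distinct elements of $A$, with $v_{xy}+v_{yx}\le1$. Path scores: $v^*_{xy}=\max\min(v_{x_0x_1},\dots,v_{x_{m-1}x_m})$ over all paths $x_0\dots x_m$ ($m\ge1$, $x_0=x$, $x_m=y$, $x_i$ pairwise distinct). For $z\in A$ put $D_v(z)=v^*_{z0}-v^*_{0z}$ if $z\ne0$ and $D_v(0)=0$. An option $x\in A$ is a path-revised approval choice of $v$ if $D_v(x)\ge D_v(y)$ for all $y\in A\setminus\{x\}$; $W(v)$ is the set of these options. *)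

(* Defs.v *)
From HB Require Import structures.
From mathcomp Require Import all_boot all_order all_algebra.
From mathcomp Require Import reals.
Set Implicit Arguments. Unset Strict Implicit. Unset Printing Implicit Defensive.
Import Order.TTheory GRing.Theory Num.Theory.
Local Open Scope ring_scope.

(* A matrix on A is represented as a function v : A -> A -> R; only the
   entries v x y with x != y are meaningful (diagonal entries are ignored
   by every definition below). *)

Definition llull (R : realType) (A : finType) (v : A -> A -> R) : Prop :=
  forall x y : A, x != y ->
    [/\ 0 <= v x y, v x y <= 1 & v x y + v y x <= 1].

Fixpoint path_min (R : realType) (A : finType) (v : A -> A -> R)
    (x : A) (t : seq A) (y : A) : R :=
  match t with
  | [::] => v x y
  | z :: t' => Num.min (v x z) (path_min v z t' y)
  end.

(* Path score v*_{xy}: maximum of path_min over all paths x = x_0 ... x_m = y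
   (m >= 1) with pairwise distinct vertices.  Such a path has m-1 < #|A|
   intermediate vertices, enumerated as n-tuples with n < #|A|.  The seed of
   the max is v x y, the score of the (always admissible for x != y) direct
   path, so it does not alter the value. *)
Definition path_score (R : realType) (A : finType) (v : A -> A -> R)
    (x y : A) : R :=
  \big[Num.max/v x y]_(n < #|A|)
    \big[Num.max/v x y]_(t : n.-tuple A | uniq (x :: rcons (tval t) y))
      path_min v x (tval t) y.

Definition Dv (R : realType) (A : finType) (o : A) (v : A -> A -> R)
    (z : A) : R :=
  if z == o then 0 else path_score v z o - path_score v o z.

Definition Wchoice (R : realType) (A : finType) (o : A) (v : A -> A -> R)
    : {set A} :=
  [set x | [forall y, (y != x) ==> (Dv o v y <= Dv o v x)]].

(* Main.v *)
Require Import Defs.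
From HB Require Import structures.
From mathcomp Require Import all_boot all_order all_algebra.
From mathcomp Require Import reals lra.
Import Order.TTheory GRing.Theory Num.Theory.
Local Open Scope ring_scope.

Lemma max_close (R : realType) (a b c d e : R) : `|a - b| < e -> `|c - d| < e ->
  `|Num.max a c - Num.max b d| < e.
Proof. rewrite !ltr_norml. move=> /andP[h1 h2] /andP[h3 h4].
rewrite /Num.max; case: ifP => H1; case: ifP => H2; apply/andP; split; lra. Qed.

Lemma min_close (R : realType) (a b c d e : R) : `|a - b| < e -> `|c - d| < e ->
  `|Num.min a c - Num.min b d| < e.
Proof. rewrite !ltr_norml. move=> /andP[h1 h2] /andP[h3 h4].
rewrite /Num.min; case: ifP => H1; case: ifP => H2; apply/andP; split; lra. Qed.

Lemma path_min_close (R : realType) (A : finType) (v w : A -> A -> R) (e : R) :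
  (forall x y : A, x != y -> `|w x y - v x y| < e) ->
  forall t x y, uniq (x :: rcons t y) -> `|path_min w x t y - path_min v x t y| < e.
Proof.
move=> H; elim=> [|z t IH] x y /=.
  by move=> /andP[]; rewrite inE => ? _; apply: H.
move=> /andP[]; rewrite inE negb_or => /andP[xz _] u; apply: min_close; first exact: H.
exact: IH.
Qed.

Lemma path_score_close (R : realType) (A : finType) (v w : A -> A -> R) (e : R) :
  (forall x y : A, x != y -> `|w x y - v x y| < e) ->
  forall x y, x != y -> `|path_score w x y - path_score v x y| < e.
Proof.
move=> H x y xy; rewrite /path_score.
apply: (big_ind2 (fun a b => `|a - b| < e)); [exact: H|move=> a b c d; exact: max_close|].
move=> n _.
apply: (big_ind2 (fun a b => `|a - b| < e)); [exact: H|move=> a b c d; exact: max_close|].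
move=> t u; exact: path_min_close.
Qed.

Lemma Dv_close (R : realType) (A : finType) (o : A) (v w : A -> A -> R) (e : R) :
  0 < e ->
  (forall x y : A, x != y -> `|w x y - v x y| < e) ->
  forall z, `|Dv o w z - Dv o v z| < 2 * e.
Proof.
move=> e0 H z; rewrite /Dv; case: ifP => zo.
  by rewrite subrr normr0; lra.
have h1 := @path_score_close _ _ v w e H _ _ (negbT zo).
have oz : o != z by rewrite eq_sym zo.
have h2 := @path_score_close _ _ v w e H _ _ oz.
move: h1 h2; rewrite !ltr_norml => /andP[a1 a2] /andP[b1 b2].
apply/andP; split; lra.
Qed.

Theorem theorem3p3 (R : realType) (A : finType) (o : A) (v : A -> A -> R) :
  llull v ->
  exists2 eps : R, 0 < eps &
    forall w : A -> A -> R, llull w ->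
      (forall x y : A, x != y -> `|w x y - v x y| < eps) ->
      Wchoice o w \subset Wchoice o v.
Proof.
move=> _.
pose f (p : A * A) : R :=
  if Dv o v p.1 < Dv o v p.2 then (Dv o v p.2 - Dv o v p.1) / 4 else 1.
have E0 : 0 < \big[Num.min/1]_(p : A * A) f p.
  apply: (big_ind (fun x : R => 0 < x)) => //.
    by move=> a b a0 b0; rewrite /Num.min; case: ifP.
  move=> p _; rewrite /f; case: ifP => // h.
  by apply: divr_gt0; rewrite ?subr_gt0.
exists (\big[Num.min/1]_(p : A * A) f p) => //.
move=> w _ Hw; apply/subsetP => x; rewrite !inE => /forallP HW.
apply/forallP => y; apply/implyP => yx; rewrite leNgt; apply/negP => lt.
have hb : \big[Num.min/1]_(p : A * A) f p <= f (x, y).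
  rewrite (bigD1 (x, y)) //= /Num.min; case: ifP => //; rewrite ltNge.
  by move/negbT; rewrite negbK.
have fxy : f (x, y) = (Dv o v y - Dv o v x) / 4 by rewrite /f /= lt.
rewrite fxy in hb.
have H1 := @Dv_close _ _ o v w _ E0 Hw x.
have H2 := @Dv_close _ _ o v w _ E0 Hw y.
have h := implyP (HW y) yx.
move: H1 H2 h hb E0 lt.
move: (\big[Num.min/1]_(p : A * A) f p) (Dv o w x) (Dv o w y) (Dv o v x) (Dv o v y).
move=> e a b c d; rewrite !ltr_norml => /andP[a1 a2] /andP[b1 b2] h hb e0 lt.
lra.
Qed.
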